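(* Let $S$ be a quasi-thin scheme on $X$, $\mathbb F$ a field and $x\in X$. Then for every $y\in X$, the Terwilliger $\mathbb F$-algebra $\mathcal T(y)$ of $S$ with respect to $y$ is isomorphic to $\mathcal T(x)$ as $\mathbb F$-algebras.
   Context: Let $X$ be a nonempty finite set. A scheme of class $d$ on $X$ is a partition $S=\{R_0,\dots,R_d\}$ of $X\times X$ into nonempty sets such that $R_0=\{(b,b):b\in X\}$; for each $c$ there is $c'$ with $R_{c'}=\{(f,e):(e,f)\in R_c\}$; and for all $i,j,k$ the intersection number $p_{ij}^k=|\{\ell\in X:(m,\ell)\in R_i,(\ell,n)\in R_j\}|$ does not depend on $(m,n)\in R_k$. The valency of $R_a$ is $k_a=p_{aa'}^0$; $S$ is quasi-thin if all $k_a\le 2$. For $y\in X$, $yR_a=\{z:(y,z)\in R_a\}$. $A_a\in M_X(\mathbb F)$ is the $(0,1)$ adjacency matrix of $R_a$ and $E_a^*(y)$ is the diagonal $(0,1)$-matrix with ones exactly at positions indexed by $yR_a$. The Terwilliger $\mathbb F$-algebra $\mathcal T(y)$ is the $\mathbb F$-subalgebra of $M_X(\mathbb F)$ generated by $A_0,\dots,A_d,E_0^*(y),\dots,E_d^*(y)$. *)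

(* Defs.v *)
From mathcomp Require Import all_boot all_order all_algebra.
Set Implicit Arguments. Unset Strict Implicit. Unset Printing Implicit Defensive.
Import GRing.Theory.
Local Open Scope ring_scope.

(* A scheme of class d on the finite set X is encoded by the function
   rel : X -> X -> 'I_d.+1 with rel m n = c  iff  (m,n) \in R_c. *)
Section Scheme.
Variables (X : finType) (d : nat) (rel : X -> X -> 'I_d.+1).

Definition pcount (i j : 'I_d.+1) (m n : X) : nat :=
  #|[set l | (rel m l == i) && (rel l n == j)]|.

Definition is_transpose (c c' : 'I_d.+1) : Prop :=
  forall e f : X, (rel f e == c') = (rel e f == c).

Definition is_scheme : Prop :=
  [/\ (forall c : 'I_d.+1, exists m n, rel m n = c),
      (forall m n : X, (rel m n == ord0) = (m == n)),
      (forall c : 'I_d.+1, exists c', is_transpose c c') &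
      (forall (i j k : 'I_d.+1) (m n m' n' : X),
          rel m n = k -> rel m' n' = k -> pcount i j m n = pcount i j m' n')].

Definition transp (c : 'I_d.+1) : 'I_d.+1 :=
  odflt ord0 [pick c' | [forall e, forall f, (rel f e == c') == (rel e f == c)]].

(* valency k_a = p_{a a'}^0, evaluated at any pair of R_0 *)
Definition valency (x0 : X) (a : 'I_d.+1) : nat := pcount a (transp a) x0 x0.

Definition quasi_thin (x0 : X) : Prop := forall a : 'I_d.+1, (valency x0 a <= 2)%N.

Variable F : fieldType.
Local Notation M := 'M[F]_#|X|.

Definition adjmx (a : 'I_d.+1) : M :=
  \matrix_(i, j) ((rel (enum_val i) (enum_val j) == a)%:R).

Definition dualidem (y : X) (a : 'I_d.+1) : M :=
  \matrix_(i, j) (((i == j) && (rel y (enum_val j) == a))%:R).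

Definition terw_gens (y : X) (A : M) : Prop :=
  exists a : 'I_d.+1, A = adjmx a \/ A = dualidem y a.

End Scheme.

Inductive gen_alg (F : fieldType) (n : nat) (G : 'M[F]_n -> Prop) : 'M[F]_n -> Prop :=
| ga_gen A : G A -> gen_alg G A
| ga_one : gen_alg G 1%:M
| ga_add A B : gen_alg G A -> gen_alg G B -> gen_alg G (A + B)
| ga_scale (c : F) A : gen_alg G A -> gen_alg G (c *: A)
| ga_mul A B : gen_alg G A -> gen_alg G B -> gen_alg G (A *m B).

Definition terwilliger (X : finType) (d : nat) (rel : X -> X -> 'I_d.+1)
  (F : fieldType) (y : X) : 'M[F]_#|X| -> Prop :=
  gen_alg (@terw_gens X d rel F y).

Definition alg_iso (F : fieldType) (n : nat) (S1 S2 : 'M[F]_n -> Prop) : Prop :=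
  exists f : 'M[F]_n -> 'M[F]_n,
    (forall A, S1 A -> S2 (f A)) /\
    (forall A B, S1 A -> S1 B -> f (A + B) = f A + f B) /\
    (forall (c : F) A, S1 A -> f (c *: A) = c *: f A) /\
    (forall A B, S1 A -> S1 B -> f (A *m B) = f A *m f B) /\
    f 1%:M = 1%:M /\
    (forall A B, S1 A -> S1 B -> f A = f B -> A = B) /\
    (forall B, S2 B -> exists2 A, S1 A & f A = B).
Arguments terwilliger {X d} rel F y _.

(* Main.v *)
Require Import Defs.
From mathcomp Require Import all_boot all_order all_algebra all_fingroup.
Set Implicit Arguments. Unset Strict Implicit. Unset Printing Implicit Defensive.
Import GRing.Theory.
Local Open Scope ring_scope.

Lemma card_sep_sum (T : finType) (S : {set T}) (p : pred T) :
  #|[set w in S | p w]| = (\sum_(w in S) (p w : nat))%N.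
Proof.
rewrite -sum1dep_card big_mkcondr /=; apply: eq_bigr => w _; by case: (p w).
Qed.

Lemma flip1 (T : finType) (C : {set T}) (p q : pred T) v0 :
  (#|C| <= 2)%N -> #|[set w in C | p w]| = #|[set w in C | q w]| ->
  v0 \in C -> p v0 != q v0 -> forall v, v \in C -> p v != q v.
Proof.
move=> hC hpq h0 d v hv.
have [->//|nv] := eqVneq v v0.
have eC : [set v0; v] = C.
  apply/eqP; rewrite eqEcard cards2 (eq_sym v0) nv.
  rewrite hC andbT.
  by apply/subsetP => z; rewrite !inE => /orP [] /eqP ->.
move: hpq; rewrite !card_sep_sum -eC !big_setU1 ?inE ?(eq_sym v0) ?nv //= !big_set1.
by move: d; case: (p v0); case: (q v0); case: (p v); case: (q v).
Qed.

Lemma grid (T : finType) (A C : {set T}) (n m : T -> T -> bool) :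
  (#|A| <= 2)%N -> (#|C| <= 2)%N ->
  (forall u, u \in A -> #|[set v in C | n u v]| = #|[set v in C | m u v]|) ->
  (forall v, v \in C -> #|[set u in A | n u v]| = #|[set u in A | m u v]|) ->
  (forall u v, u \in A -> v \in C -> m u v = n u v) \/
  (forall u v, u \in A -> v \in C -> m u v = ~~ n u v).
Proof.
move=> hA hC hr hc.
case: (boolP [exists u in A, exists v in C, m u v != n u v]) => [/existsP [u0 /andP [hu0 /existsP [v0 /andP [hv0 d]]]] | /existsPn H]; last first.
  left=> u v hu hv; move: (H u); rewrite hu /= => /existsPn /(_ v).
  by rewrite hv /= negbK => /eqP.
right=> u v hu hv.
have row : forall w, w \in C -> n u0 w != m u0 w.
  move=> w hw; apply: (@flip1 _ C (n u0) (m u0) v0 hC (hr u0 hu0) hv0) => //.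
  by rewrite eq_sym.
have := @flip1 _ A (fun u => n u v) (fun u => m u v) u0 hA (hc v hv) hu0 (row v hv) u hu.
by case: (m u v); case: (n u v).
Qed.

Lemma transpP (X : finType) d (rel : X -> X -> 'I_d.+1) : is_scheme rel ->
  forall c e f, (rel f e == transp rel c) = (rel e f == c).
Proof.
case=> _ _ Ht _ c e f; rewrite /transp; case: pickP.
  by move=> c' /forallP /(_ e) /forallP /(_ f) /eqP.
move=> H; have [c' Hc'] := Ht c.
move: (H c') => /= /negbT /forallPn [e' /forallPn [f']].
by rewrite Hc' eqxx.
Qed.

Lemma fiber_card (X : finType) d (rel : X -> X -> 'I_d.+1) (x0 z : X) a :
  is_scheme rel -> #|[set v | rel z v == a]| = valency rel x0 a.
Proof.
move=> Hs; have Ht := transpP Hs.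
case: Hs => _ H0 _ Hp.
have r0 : forall w, rel w w = ord0 by move=> w; apply/eqP; rewrite H0.
rewrite /valency (Hp _ _ ord0 x0 x0 z z (r0 _) (r0 _)).
by rewrite /pcount; apply: eq_card => v; rewrite !inE Ht andbb.
Qed.

Definition ridx (X : finType) (r : {perm X}) (i : 'I_#|X|) : 'I_#|X| :=
  enum_rank (r (enum_val i)).
Definition fmap (X : finType) (F : fieldType) (r : {perm X}) (A : 'M[F]_#|X|)
  : 'M[F]_#|X| := \matrix_(i, j) A (ridx r i) (ridx r j).

Lemma ridx_inj (X : finType) (r : {perm X}) : injective (ridx r).
Proof.
by move=> i j /(congr1 enum_val); rewrite !enum_rankK => /perm_inj /enum_val_inj.
Qed.
Lemma ridxK (X : finType) (r : {perm X}) i : ridx r (ridx (r^-1)%g i) = i.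
Proof. by rewrite /ridx enum_rankK permKV enum_valK. Qed.
Lemma ridxKV (X : finType) (r : {perm X}) i : ridx (r^-1)%g (ridx r i) = i.
Proof. by rewrite /ridx enum_rankK permK enum_valK. Qed.

Section FM.
Lemma fmapD (X : finType) (F : fieldType) (r : {perm X}) (A B : 'M[F]_#|X|) :
  fmap r (A + B) = fmap r A + fmap r B.
Proof. by apply/matrixP => i j; rewrite !mxE. Qed.
Lemma fmapZ (X : finType) (F : fieldType) (r : {perm X}) c (A : 'M[F]_#|X|) :
  fmap r (c *: A) = c *: fmap r A.
Proof. by apply/matrixP => i j; rewrite !mxE. Qed.
Lemma fmapM (X : finType) (F : fieldType) (r : {perm X}) (A B : 'M[F]_#|X|) :
  fmap r (A *m B) = fmap r A *m fmap r B.
Proof.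
apply/matrixP => i j; rewrite !mxE (reindex_inj (@ridx_inj _ r)) /=.
by apply: eq_bigr => k _; rewrite !mxE.
Qed.
Lemma fmap1 (X : finType) (F : fieldType) (r : {perm X}) :
  fmap r (1%:M : 'M[F]_#|X|) = 1%:M.
Proof. by apply/matrixP => i j; rewrite !mxE (inj_eq (@ridx_inj _ r)). Qed.
Lemma fmapK (X : finType) (F : fieldType) (r : {perm X}) (A : 'M[F]_#|X|) :
  fmap r (fmap (r^-1)%g A) = A.
Proof. by apply/matrixP => i j; rewrite !mxE !ridxKV. Qed.
Lemma fmapKV (X : finType) (F : fieldType) (r : {perm X}) (A : 'M[F]_#|X|) :
  fmap (r^-1)%g (fmap r A) = A.
Proof. by apply/matrixP => i j; rewrite !mxE !ridxK. Qed.
End FM.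

Lemma exists_perm (X : finType) d (rel : X -> X -> 'I_d.+1) (x y : X) :
  is_scheme rel -> exists r : {perm X}, forall v, rel y (r v) = rel x v.
Proof.
move=> Hs.
have Hc : forall a, #|[set w | rel y w == a]| = #|[set w | rel x w == a]|.
  by move=> a; rewrite (fiber_card x y a Hs) (fiber_card x x a Hs).
pose g v := nth y (enum [set w | rel y w == rel x v])
                  (index v (enum [set w | rel x w == rel x v])).
have gP : forall v, rel y (g v) = rel x v.
  move=> v; apply/eqP.
  have : g v \in enum [set w | rel y w == rel x v].
    by apply: mem_nth; rewrite -cardE Hc cardE index_mem mem_enum inE.
  by rewrite mem_enum inE.
have ginj : injective g.
  move=> v w e.
  have ea : rel x v = rel x w by rewrite -!gP e.
  have hv : v \in enum [set w0 | rel x w0 == rel x w] by rewrite mem_enum inE ea.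
  have hw : w \in enum [set w0 | rel x w0 == rel x w] by rewrite mem_enum inE.
  have sz : forall u, u \in enum [set w0 | rel x w0 == rel x w] ->
    (index u (enum [set w0 | rel x w0 == rel x w]) < size (enum [set w0 | rel y w0 == rel x w]))%N.
    by move=> u hu; rewrite -cardE Hc cardE index_mem.
  move: e; rewrite /g ea => /eqP; rewrite (nth_uniq _ (sz _ hv) (sz _ hw) (enum_uniq _)).
  by move=> /eqP ei; rewrite -(nth_index y hv) ei nth_index.
by exists (perm ginj) => v; rewrite permE.
Qed.

Lemma key (X : finType) d (rel : X -> X -> 'I_d.+1) (x y : X) (r : {perm X})
  (a b c : 'I_d.+1) :
  is_scheme rel -> (forall z e, (#|[set v | rel z v == e]| <= 2)%N) ->
  (forall v, rel y (r v) = rel x v) ->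
  (forall u v, rel x u == a -> rel x v == c -> (rel (r u) (r v) == b) = (rel u v == b)) \/
  (forall u v, rel x u == a -> rel x v == c -> (rel (r u) (r v) == b) = ~~ (rel u v == b)).
Proof.
move=> Hs Hq Hr.
have Ht := transpP Hs. case: Hs => _ H0 _ Hp.
have := @grid _ [set u | rel x u == a] [set v | rel x v == c]
  (fun u v => rel u v == b) (fun u v => rel (r u) (r v) == b) (Hq x a) (Hq x c).
case.
- move=> u; rewrite inE => hu.
  transitivity (pcount rel b (transp rel c) u x).
    by rewrite /pcount; apply: eq_card => v; rewrite !inE Ht andbC.
  rewrite (Hp _ _ (transp rel a) u x (r u) y).
  + rewrite /pcount -(card_preimset _ (@perm_inj _ r)).
    by apply: eq_card => v; rewrite !inE Ht Hr andbC.
  + by apply/eqP; rewrite Ht.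
  + by apply/eqP; rewrite Ht Hr.
- move=> v; rewrite inE => hv.
  transitivity (pcount rel a b x v).
    by rewrite /pcount; apply: eq_card => u; rewrite !inE.
  rewrite (Hp _ _ c x v y (r v)).
  + rewrite /pcount -(card_preimset _ (@perm_inj _ r)).
    by apply: eq_card => u; rewrite !inE Hr.
  + exact/eqP.
  + by rewrite Hr; apply/eqP.
- by move=> H; left => u v hu hv; rewrite H ?inE.
- by move=> H; right => u v hu hv; rewrite H ?inE.
Qed.

Lemma keyF (X : finType) d (rel : X -> X -> 'I_d.+1) (F : fieldType) (x y : X)
  (r : {perm X}) (a b c : 'I_d.+1) :
  is_scheme rel -> (forall z e, (#|[set v | rel z v == e]| <= 2)%N) ->
  (forall v, rel y (r v) = rel x v) ->
  exists al be : F, forall u v, rel x u == a -> rel x v == c ->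
    ((rel (r u) (r v) == b)%:R : F) = al * (rel u v == b)%:R + be.
Proof.
move=> Hs Hq Hr; case: (key a b c Hs Hq Hr) => H.
  by exists 1, 0 => u v hu hv; rewrite H // mul1r addr0.
exists (-1), 1 => u v hu hv; rewrite H //.
by case: (rel u v == b) => /=; [rewrite mulN1r addNr | rewrite mulr0 add0r].
Qed.

Lemma dual_mull (X : finType) d (rel : X -> X -> 'I_d.+1) (F : fieldType) z a
  (M : 'M[F]_#|X|) i j :
  (dualidem rel F z a *m M) i j = (rel z (enum_val i) == a)%:R * M i j.
Proof.
rewrite !mxE (bigD1 i) //= big1 ?addr0; first by rewrite /dualidem !mxE eqxx.
by move=> k /negbTE nk; rewrite /dualidem !mxE eq_sym nk mul0r.
Qed.

Lemma dual_mulr (X : finType) d (rel : X -> X -> 'I_d.+1) (F : fieldType) z c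
  (M : 'M[F]_#|X|) i j :
  (M *m dualidem rel F z c) i j = M i j * (rel z (enum_val j) == c)%:R.
Proof.
rewrite !mxE (bigD1 j) //= big1 ?addr0; first by rewrite /dualidem !mxE eqxx.
by move=> k /negbTE nk; rewrite /dualidem !mxE nk mulr0.
Qed.

Lemma lincomb_entry (F : fieldType) n (M1 M2 : 'M[F]_n) al be i j :
  (al *: M1 + be *: M2) i j = al * M1 i j + be * M2 i j.
Proof. by rewrite !mxE. Qed.

Lemma sum_ind (F : fieldType) d (e : 'I_d.+1) :
  \sum_(a : 'I_d.+1) ((e == a)%:R : F) = 1.
Proof.
rewrite (bigD1 e) //= eqxx big1 ?addr0 //.
by move=> k /negbTE nk; rewrite eq_sym nk.
Qed.

Lemma T0 (X : finType) d (rel : X -> X -> 'I_d.+1) (F : fieldType) x :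
  terwilliger rel F x 0.
Proof.
have -> : (0 : 'M[F]_#|X|) = 0 *: 1%:M by rewrite scale0r.
by apply: ga_scale; apply: ga_one.
Qed.

Lemma Tsum (X : finType) d (rel : X -> X -> 'I_d.+1) (F : fieldType) x
  (I : finType) (G : I -> 'M[F]_#|X|) :
  (forall i, terwilliger rel F x (G i)) -> terwilliger rel F x (\sum_i G i).
Proof.
move=> H; apply: (big_ind (terwilliger rel F x)) => //.
- exact: T0.
- by move=> A B hA hB; apply: ga_add.
Qed.

Lemma adj_in (X : finType) d (rel : X -> X -> 'I_d.+1) (F : fieldType) (x y : X)
  (r : {perm X}) b :
  is_scheme rel -> (forall z e, (#|[set v | rel z v == e]| <= 2)%N) ->
  (forall v, rel y (r v) = rel x v) ->
  terwilliger rel F x (fmap r (adjmx rel F b)).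
Proof.
move=> Hs Hq Hr.
set B := fmap r _.
have Bij : forall i j, B i j = (rel (r (enum_val i)) (r (enum_val j)) == b)%:R.
  by move=> i j; rewrite /B /fmap /adjmx !mxE /ridx !enum_rankK.
set Js := \sum_(e : 'I_d.+1) adjmx rel F e.
have Jij : forall i j, Js i j = 1.
  move=> i j; rewrite /Js summxE.
  under eq_bigr => e _ do rewrite /adjmx mxE.
  exact: sum_ind.
have TJ : terwilliger rel F x Js.
  by apply: Tsum => e; apply: ga_gen; exists e; left.
have -> : B = \sum_a \sum_c (dualidem rel F x a *m B *m dualidem rel F x c).
  apply/matrixP => i j; rewrite summxE.
  under eq_bigr => a _ do rewrite summxE.
  under eq_bigr => a _ do under eq_bigr => c _ do rewrite dual_mulr dual_mull.
  under eq_bigr => a _ do rewrite -mulr_sumr sum_ind mulr1.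
  by rewrite -mulr_suml sum_ind mul1r.
apply: Tsum => a; apply: Tsum => c.
have [al [be H]] := @keyF _ _ rel F x y r a b c Hs Hq Hr.
have -> : dualidem rel F x a *m B *m dualidem rel F x c =
  al *: (dualidem rel F x a *m adjmx rel F b *m dualidem rel F x c) +
  be *: (dualidem rel F x a *m Js *m dualidem rel F x c).
  apply/matrixP => i j; rewrite lincomb_entry !dual_mulr !dual_mull Bij Jij.
  rewrite /adjmx mxE.
  case ha: (rel x (enum_val i) == a); case hc: (rel x (enum_val j) == c) => /=;
    rewrite ?mulr1n ?mulr0n ?mul0r ?mulr0 ?addr0 ?mul1r ?mulr1 //.
  by rewrite H.
apply: ga_add; apply: ga_scale; apply: ga_mul; try apply: ga_mul;
  try (by apply: ga_gen; exists a; right); try (by apply: ga_gen; exists c; right);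
  try (by apply: ga_gen; exists b; left); exact: TJ.
Qed.

Lemma core (X : finType) d (rel : X -> X -> 'I_d.+1) (F : fieldType) (x y : X)
  (r : {perm X}) :
  is_scheme rel -> (forall z e, (#|[set v | rel z v == e]| <= 2)%N) ->
  (forall v, rel y (r v) = rel x v) ->
  forall A, terwilliger rel F y A -> terwilliger rel F x (fmap r A).
Proof.
move=> Hs Hq Hr A; rewrite /terwilliger; elim => {A}.
- move=> A [e [->|->]]; first exact: adj_in.
  apply: ga_gen; exists e; right; apply/matrixP => i j.
  by rewrite /fmap /dualidem !mxE (inj_eq (@ridx_inj _ r)) /ridx enum_rankK Hr.
- by rewrite fmap1; apply: ga_one.
- by move=> A B _ hA _ hB; rewrite fmapD; apply: ga_add.
- by move=> c' A _ hA; rewrite fmapZ; apply: ga_scale.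
- by move=> A B _ hA _ hB; rewrite fmapM; apply: ga_mul.
Qed.

Theorem theoremD (X : finType) (d : nat) (rel : X -> X -> 'I_d.+1)
  (F : fieldType) (x : X) :
  is_scheme rel -> quasi_thin rel x ->
  forall y : X, alg_iso (terwilliger rel F y) (terwilliger rel F x).
Proof.
move=> Hs Hq y.
have Hq' : forall z e, (#|[set v | rel z v == e]| <= 2)%N.
  by move=> z e; rewrite (fiber_card x z e Hs); apply: Hq.
have [r Hr] := exists_perm x y Hs.
have Hr' : forall v, rel x ((r^-1)%g v) = rel y v by move=> v; rewrite -Hr permKV.
exists (fmap r); split; [|split; [|split; [|split; [|split; [|split]]]]].
- exact: core.
- by move=> A B _ _; rewrite fmapD.
- by move=> c A _; rewrite fmapZ.
- by move=> A B _ _; rewrite fmapM.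
- exact: fmap1.
- by move=> A B _ _ e; rewrite -(fmapKV r A) e fmapKV.
- move=> B hB; exists (fmap (r^-1)%g B); last exact: fmapK.
  exact: (core Hs Hq' Hr').
Qed.
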